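(* Let $n'$ be an odd positive integer and $q\ge 3$. There exists an ordering of all words of $\mathbb{Z}_q^{n'}$ in which consecutive words have Lee distance $1$, beginning with $(0,0,\ldots,0)$ and ending with $(1,1,\ldots,1)$.
   Context: Lee distance between $v,u\in\mathbb{Z}_q^{n'}$ is $\sum_{i}\min\{|v_i-u_i|,q-|v_i-u_i|\}$, entries regarded as integers in $\{0,\ldots,q-1\}$. *)

(* Defs.v *)
From mathcomp Require Import all_boot.
Set Implicit Arguments. Unset Strict Implicit. Unset Printing Implicit Defensive.

Definition word (q n : nat) := (n.-tuple 'I_q)%type.

Definition lee_sym (q : nat) (a b : 'I_q) : nat :=
  let d := (if a <= b then b - a else a - b)%N in minn d (q - d).

Definition lee_dist (q n : nat) (v u : word q n) : nat :=
  \sum_(i < n) lee_sym (tnth v i) (tnth u i).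

Definition is_const_word (q n : nat) (c : nat) (w : word q n) : bool :=
  [forall i, nat_of_ord (tnth w i) == c].

(* Main.v *)
Require Import Defs.
From mathcomp Require Import all_boot zify.
Set Implicit Arguments. Unset Strict Implicit. Unset Printing Implicit Defensive.
Section Gen.
Variables (X Y : finType) (eX : rel X) (eY : rel Y).

Definition ham (T : finType) (e : rel T) (s : seq T) (a b : T) :=
  [/\ sorted e s, uniq s, (forall x, x \in s), head a s = a & last a s = b].

Definition adjP : rel (X * Y) := fun u v =>
  (eX u.1 v.1 && (u.2 == v.2)) || ((u.1 == v.1) && eY u.2 v.2).

Lemma adjP_r o a b : eY a b -> adjP (o, a) (o, b).
Proof. by rewrite /adjP /= eqxx => ->; rewrite orbT. Qed.

Fixpoint snake (O : seq X) (I : seq Y) : seq (X * Y) :=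
  if O is o :: O' then map (pair o) I ++ snake O' (rev I) else [::].

Lemma last_rev (T : Type) (x : T) s : last x (rev s) = head x s.
Proof. by case: s => //= y s; rewrite rev_cons last_rcons. Qed.

Lemma head_rev (T : Type) (x : T) s : head x (rev s) = last x s.
Proof. by case/lastP: s => //= s y; rewrite rev_rcons last_rcons. Qed.

Lemma last_map_pair (A B : Type) (a : A) (b : B) s : last (a, b) (map (pair a) s) = (a, last b s).
Proof. by elim: s b => //= x s IH b; rewrite IH. Qed.

Lemma sorted_cat_join (T : Type) (e : rel T) (x0 : T) s1 s2 :
  0 < size s1 -> 0 < size s2 -> sorted e s1 -> sorted e s2 ->
  e (last x0 s1) (head x0 s2) -> sorted e (s1 ++ s2).
Proof.
case: s1 => [|x s1] // _; case: s2 => [|y s2] // _ /= H1 H2 H3.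
by rewrite cat_path H1 /= H3 H2.
Qed.

Lemma mem_snake O I o i : ((o, i) \in snake O I) = (o \in O) && (i \in I).
Proof.
elim: O I => [|o' O IH] I //=.
rewrite mem_cat IH mem_rev in_cons.
have -> : ((o, i) \in [seq (o', y) | y <- I]) = (o == o') && (i \in I).
  apply/mapP/andP => [[y Hy [-> ->]]|[/eqP -> Hi]]; first by [].
  by exists i.
by case: (o == o'); case: (o \in O); case: (i \in I).
Qed.

Lemma uniq_snake O I : uniq O -> uniq I -> uniq (snake O I).
Proof.
elim: O I => [|o O IH] I //= /andP [HoO HO] HI.
rewrite cat_uniq IH ?rev_uniq // map_inj_uniq ?HI; last by move=> a b [].
rewrite andbT /=; apply/hasPn => -[a b]; rewrite mem_snake => /andP [Ha _].
by apply/mapP => -[y _ [Hay _]]; move: HoO; rewrite -Hay Ha.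
Qed.

Lemma head_snake O I o0 i0 : O != [::] -> I != [::] ->
  head (o0, i0) (snake O I) = (head o0 O, head i0 I).
Proof. by case: O => [|o O] // _; case: I => [|i I]. Qed.

Lemma last_snake O I o0 i0 : O != [::] -> I != [::] ->
  last (o0, i0) (snake O I) =
  (last o0 O, if odd (size O) then last i0 I else head i0 I).
Proof.
elim: O o0 i0 I => [|o O IH] o0 i0 I // _ HI.
case: O IH => [|o' O] IH.
  rewrite /= cats0; case: I HI => [|i I] //= _.
  by rewrite last_map_pair.
change (last (o0, i0) (map (pair o) I ++ snake (o' :: O) (rev I)) =
  (last o0 [:: o, o' & O], if odd (size [:: o, o' & O]) then last i0 I else head i0 I)).
rewrite last_cat; case: (last (o0, i0) _) => a b.
rewrite IH //; last by rewrite -size_eq0 size_rev size_eq0.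
rewrite last_rev head_rev /=.
case: I HI => [|i I] // _ /=; by case: (odd (size O)).
Qed.

Lemma sorted_snake O I : symmetric eY -> sorted eX O -> sorted eY I ->
  sorted adjP (snake O I).
Proof.
move=> Hsym; elim: O I => [|o O IH] I //= HO HI.
case: I HI => [|i I] HI; first by rewrite /= (_ : snake O [::] = [::]) //; elim: (O) => //= ? ? ->.
have HIr : sorted eY (rev (i :: I)).
  rewrite rev_sorted; apply: sub_sorted HI => a b; by rewrite Hsym.
case: O HO IH => [|o' O] HO IH.
  change (sorted adjP (map (pair o) (i :: I) ++ [::])).
  rewrite cats0 sorted_map; apply: sub_sorted HI => a b; exact: adjP_r.
apply: (@sorted_cat_join _ _ (o, i)) => //.
- by rewrite /= size_cat size_map size_rev; case: (size I).
- rewrite sorted_map; apply: sub_sorted HI => a b; exact: adjP_r.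
- by apply: IH => //; case/andP: HO.
rewrite head_snake //; last by rewrite -size_eq0 size_rev.
rewrite last_map_pair head_rev /adjP /= eqxx andbT.
by case/andP: HO => ->.
Qed.

Lemma ham_snake O I a b c d : symmetric eY ->
  ham eX O a b -> ham eY I c d ->
  ham adjP (snake O I) (a, c) (b, if odd (size O) then d else c).
Proof.
move=> Hsym [O1 O2 O3 O4 O5] [I1 I2 I3 I4 I5].
have HO : O != [::] by case: O O3 {O1 O2 O4 O5} => // /(_ a).
have HI : I != [::] by case: I I3 {I1 I2 I4 I5} => // /(_ c).
split.
- exact: sorted_snake.
- exact: uniq_snake.
- by case=> x y; rewrite mem_snake O3 I3.
- by rewrite head_snake // O4 I4.
- by rewrite last_snake // O5 I5 I4.
Qed.

Lemma adjP_sym : symmetric eX -> symmetric eY -> symmetric adjP.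
Proof.
move=> HX HY [a b] [c d]; rewrite /adjP /= HX HY.
by rewrite (eq_sym a) (eq_sym b).
Qed.

Lemma ham_rev (T : finType) (e : rel T) s a b : symmetric e -> ham e s a b -> ham e (rev s) b a.
Proof.
move=> Hsym [H1 H2 H3 H4 H5].
have Hne : 0 < size s by case: s H3 {H1 H2 H4 H5} => // /(_ a).
split.
- by rewrite rev_sorted; apply: sub_sorted H1 => x y; rewrite Hsym.
- by rewrite rev_uniq.
- by move=> x; rewrite mem_rev.
- rewrite head_rev -H5; by case: s Hne {H1 H2 H3 H4 H5}.
- rewrite last_rev -[in RHS]H4; by case: s Hne {H1 H2 H3 H4 H5}.
Qed.

Lemma ham_map (T U : finType) (e : rel T) (e' : rel U) (f : T -> U) s a b :
  injective f -> (forall u, exists t, u = f t) ->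
  (forall x y, e x y -> e' (f x) (f y)) ->
  ham e s a b -> ham e' (map f s) (f a) (f b).
Proof.
move=> finj fsurj fadj [H1 H2 H3 H4 H5]; split.
- by rewrite sorted_map; apply: sub_sorted H1.
- by rewrite map_inj_uniq.
- by move=> u; case: (fsurj u) => t ->; rewrite mem_map.
- by case: s H4 {H1 H2 H3 H5} => //= x s ->.
- by rewrite last_map H5.
Qed.

Lemma ham_step2 P h0 h1 A y0 ya C y1 : symmetric eY ->
  ham eX P h0 h1 -> h0 != h1 -> ham eY A y0 ya ->
  ham eY C (if odd (size P).-1 then ya else y0) y1 ->
  exists S, ham adjP S (h0, y0) (h1, y1).
Proof.
move=> Hsym [P1 P2 P3 P4 P5] Hne [A1 A2 A3 A4 A5].
move Hyc : (if odd (size P).-1 then ya else y0) => yc [C1 C2 C3 C4 C5].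
have HA : A != [::] by case: A A3 {A1 A2 A4 A5} => // /(_ y0).
have HC : C != [::] by case: C C3 {C1 C2 C4 C5} => // /(_ y1).
case: P P1 P2 P3 P4 P5 Hyc => [|p P0] P1 P2 P3 P4 P5 Hyc; first by have := P3 h0.
rewrite /= in P4; subst p.
case: P0 P1 P2 P3 P5 Hyc => [|p1 P0] P1 P2 P3 P5 Hyc; first by rewrite /= in P5; rewrite P5 eqxx in Hne.
rewrite /= in P5.
have Hl : p1 :: P0 = rcons (belast p1 P0) h1 by rewrite lastI P5.
set B := belast p1 P0.
have Hsz : size (p1 :: P0) = size (h0 :: B) by rewrite /B /= size_belast.
rewrite Hl in P1 P2 P3; move: Hyc.
have -> : (size [:: h0, p1 & P0]).-1 = size (h0 :: B) by rewrite /B /= size_belast.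
move=> Hyc.
move: P1; rewrite /= rcons_path => /andP [PB Plast].
move: P2; rewrite -rcons_cons rcons_uniq => /andP [Hh1 PBu].
exists (snake (h0 :: B) A ++ map (pair h1) C); split.
- apply: (@sorted_cat_join _ _ (h0, y0)).
  + by rewrite /= size_cat size_map addn_gt0 lt0n size_eq0 HA.
  + by rewrite size_map lt0n size_eq0.
  + exact: sorted_snake.
  + by rewrite sorted_map; apply: sub_sorted C1 => a b; exact: adjP_r.
  + rewrite last_snake // A5 A4 Hyc -C4; case: C HC {C1 C2 C3 C4 C5} => //= c C' _.
    by rewrite /adjP /= eqxx andbT; move: Plast; rewrite /B => ->.
- rewrite cat_uniq uniq_snake //= map_inj_uniq ?C2 //; last by move=> a b [].
  rewrite andbT; apply/hasPn => x /mapP [y _ ->]. change ((h1, y) \notin snake (h0 :: B) A); rewrite mem_snake.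
  by apply/negP => /andP [Ha _]; move: Hh1; rewrite /B Ha.
- case=> x y; rewrite mem_cat mem_snake A3 andbT.
  have := P3 x; rewrite -rcons_cons mem_rcons in_cons.
  case/orP => [/eqP ->|-> //].
  by apply/orP; right; apply/mapP; exists y.
- by case: (A) HA A4 => //= a A' _ ->.
- rewrite last_cat; case: C HC C5 {C1 C2 C3 C4} => //= c C' _ <-.
  by rewrite last_map_pair.
Qed.
End Gen.
Section Conc.
Variable q' : nat.
Local Notation q := q'.+3.

Definition adj1 : rel 'I_q := fun a b => lee_sym a b == 1.
Definition adjW n : rel (word q n) := fun u v => lee_dist u v == 1.

Lemma lee_sym_sym (a b : 'I_q) : lee_sym a b = lee_sym b a.
Proof. rewrite /lee_sym; case: (leqP a b) => H1; case: (leqP b a) => H2; lia. Qed.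

Lemma lee_sym0 (a : 'I_q) : lee_sym a a = 0.
Proof. by rewrite /lee_sym leqnn subnn min0n. Qed.

Lemma adj1_sym : symmetric adj1.
Proof. by move=> a b; rewrite /adj1 lee_sym_sym. Qed.

Lemma adjW_sym n : symmetric (@adjW n).
Proof.
move=> a b; rewrite /adjW /lee_dist; congr (_ == _).
by apply: eq_bigr => i _; rewrite lee_sym_sym.
Qed.

Lemma lee_dist0 n (t : word q n) : lee_dist t t = 0.
Proof. by rewrite /lee_dist big1 // => i _; rewrite lee_sym0. Qed.

Lemma lee_dist_cons n a b (t u : word q n) :
  lee_dist [tuple of a :: t] [tuple of b :: u] = lee_sym a b + lee_dist t u.
Proof.
by rewrite /lee_dist big_ord_recl !tnth0; congr (_ + _); apply: eq_bigr => i _; rewrite !tnthS.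
Qed.

Lemma adj1_succ (a b : 'I_q) : nat_of_ord b = (nat_of_ord a).+1 -> adj1 a b.
Proof. move=> H; have := ltn_ord b; rewrite /adj1 /lee_sym H => Hb; case: leqP => Hc; apply/eqP; lia. Qed.

Lemma adj1_wrap (a b : 'I_q) : nat_of_ord a = 0 -> nat_of_ord b = q.-1 -> adj1 a b.
Proof. move=> Ha Hb; rewrite /adj1 /lee_sym Ha Hb; case: leqP => Hc; apply/eqP; lia. Qed.

Definition f1 n (p : 'I_q * word q n) : word q n.+1 := [tuple of p.1 :: p.2].

Lemma f1_inj n : injective (@f1 n).
Proof.
move=> [a t] [b u] /(congr1 val) /= [-> H]; congr pair; exact: val_inj.
Qed.

Lemma f1_surj n (w : word q n.+1) : exists p, w = f1 p.
Proof. by case/tupleP: w => a t; exists (a, t). Qed.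

Lemma f1_adj n x y : adjP adj1 (@adjW n) x y -> adjW (f1 x) (f1 y).
Proof.
case: x y => [a t] [b u]; rewrite /adjP /adjW /f1 /= lee_dist_cons.
case/orP => /andP [H1 H2]; first by move: H1; rewrite (eqP H2) lee_dist0 addn0.
by move: H2; rewrite (eqP H1) lee_sym0.
Qed.

Definition f2 n (p : word q n * ('I_q * 'I_q)) : word q n.+2 :=
  f1 (p.2.1, f1 (p.2.2, p.1)).

Lemma f2_inj n : injective (@f2 n).
Proof.
move=> [t [r c]] [t' [r' c']] H; by case: (f1_inj H) => -> -> /val_inj ->.
Qed.

Lemma f2_surj n (w : word q n.+2) : exists p, w = f2 p.
Proof.
case: (f1_surj w) => -[r w'] ->; case: (f1_surj w') => -[c t] ->.
by exists (t, (r, c)).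
Qed.

Lemma f2_adj n x y : adjP (@adjW n) (adjP adj1 adj1) x y -> adjW (f2 x) (f2 y).
Proof.
case: x y => [t [r c]] [t' [r' c']]; rewrite /f2 /= => H.
apply: f1_adj; rewrite /adjP /=.
case/orP: H => /andP [H1 H2].
  move: H2 => /eqP [-> ->]; apply/orP; right; rewrite eqxx /=; apply: f1_adj.
  by rewrite /adjP /= eqxx H1 orbT.
move/eqP: H1 => /= ->; rewrite /= in H2; case/orP: H2 => /andP [/= H3 /= H4].
  by apply/orP; left; rewrite H3 (eqP H4) eqxx.
apply/orP; right; rewrite H3 /=; apply: f1_adj.
by rewrite /adjP /= H4 eqxx.
Qed.


Definition gq (k : nat) : 'I_q := inord ((q - k) %% q).
Definition Q : seq 'I_q := map gq (iota 0 q).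
Definition o0 : 'I_q := inord 0.
Definition o1 : 'I_q := inord 1.

Lemma qk_mod k : k < q -> (q - k) %% q = if k == 0 then 0 else q - k.
Proof.
case: k => [|k] Hk; first by rewrite subn0 modnn.
by rewrite modn_small //; lia.
Qed.

Lemma gq_val k : k < q -> nat_of_ord (gq k) = if k == 0 then 0 else q - k.
Proof.
move=> Hk; rewrite /gq inordK; [exact: qk_mod | exact: ltn_pmod].
Qed.

Lemma path_iota_Q n m : m + n < q -> path (relpre gq adj1) m (iota m.+1 n).
Proof.
elim: n m => [|n IH] m H //=; apply/andP; split; last by apply: IH; lia.
rewrite /relpre; case: m H => [|m] H.
  by apply: adj1_wrap; rewrite gq_val //; lia.
rewrite adj1_sym; apply: adj1_succ; rewrite !gq_val // /=; lia.
Qed.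

Lemma last_iota_l n m : last m (iota m.+1 n) = m + n.
Proof. by elim: n m => [|n IH] m /=; rewrite ?addn0 // IH addnS. Qed.

Lemma ham_Q : ham adj1 Q o0 o1.
Proof.
split.
- rewrite /Q sorted_map; exact: (path_iota_Q (n := q'.+2) (m := 0)).
- rewrite /Q map_inj_in_uniq ?iota_uniq // => a b; rewrite !mem_iota => Ha Hb E.
  have := congr1 (@nat_of_ord _) E; rewrite !gq_val; try lia.
  by case: eqP; case: eqP; lia.
- move=> a; apply/mapP; exists (if nat_of_ord a == 0 then 0 else q - a).
    rewrite mem_iota; case: eqP => Ha //; have := ltn_ord a; lia.
  apply: val_inj => /=; rewrite gq_val; last by case: eqP => Ha //; have := ltn_ord a; lia.
  have := ltn_ord a; case: (nat_of_ord a =P 0) => H1 /= Ha; first by []. case: (q - a =P 0) => H2; lia.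
- by rewrite /Q /= /gq subn0 modnn.
- rewrite /Q /= (last_map gq) /o1 /gq; congr inord.
  rewrite last_iota_l subSS subSn // subnn modn_small //.
Qed.

Lemma size_Q : size Q = q.
Proof. by rewrite size_map size_iota. Qed.

Definition cw n (c : 'I_q) : word q n := [tuple of nseq n c].

Lemma cw_const n (c : 'I_q) : is_const_word c (cw n c).
Proof. by apply/forallP => i; rewrite (tnth_nth c) /= nth_nseq ltn_ord. Qed.

Lemma f1_cw n (c : 'I_q) : f1 (c, cw n c) = cw n.+1 c.
Proof. exact: val_inj. Qed.

Lemma ham_W0 : ham (@adjW 0) [:: cw 0 o0] (cw 0 o0) (cw 0 o0).
Proof.
split => //; first by move=> x; rewrite tuple0 mem_seq1 (tuple0 (cw 0 o0)).
Qed.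

Lemma ham_size n s a b : @ham (word q n) (@adjW n) s a b -> size s = q ^ n.
Proof.
case=> _ H1 H2 _ _; rewrite -(card_uniqP H1) -[q in q ^ n]card_ord -card_tuple.
by apply: eq_card => x; rewrite H2.
Qed.

Lemma stepQ n s (e : word q n) : ham (@adjW n) s (cw n o0) e ->
  exists s', ham (@adjW n.+1) s' (cw n.+1 o0) (f1 (o1, if odd q then e else cw n o0)).
Proof.
move=> H; exists (map (@f1 n) (snake Q s)).
rewrite -f1_cw.
have := ham_snake (@adjW_sym n) ham_Q H; rewrite size_Q => H2.
apply: (ham_map _ _ _ H2); [exact: f1_inj | exact: f1_surj | exact: f1_adj].
Qed.

Lemma cw_neq n : 0 < n -> cw n o0 != cw n o1.
Proof.
case: n => [|n] // _; apply/eqP => /(congr1 val) /= [] /(congr1 (@nat_of_ord _)).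
by rewrite /o0 /o1 !inordK.
Qed.

Lemma f2_cw n (c : 'I_q) : f2 (cw n c, (c, c)) = cw n.+2 c.
Proof. exact: val_inj. Qed.

Definition swap2 (p : 'I_q * 'I_q) : 'I_q * 'I_q := (p.2, p.1).

Lemma step2 n s : odd n -> ~~ odd q -> ham (@adjW n) s (cw n o0) (cw n o1) ->
  exists s', ham (@adjW n.+2) s' (cw n.+2 o0) (cw n.+2 o1).
Proof.
move=> Hn Hq Hs.
have HA := ham_snake adj1_sym ham_Q ham_Q; rewrite size_Q (negPf Hq) in HA.
have HQr := ham_rev adj1_sym ham_Q.
have HC0 := ham_snake adj1_sym ham_Q HQr; rewrite size_Q (negPf Hq) in HC0.
have HC : ham (adjP adj1 adj1) (map swap2 (snake Q (rev Q))) (swap2 (o0, o1)) (swap2 (o1, o1)).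
  apply: (ham_map _ _ _ HC0).
  - by case=> [a b] [c d] [-> ->].
  - by case=> [a b]; exists (b, a).
  - case=> [a b] [c d]; rewrite /adjP /= => /orP [/andP [H1 H2]|/andP [H1 H2]].
      by rewrite H1 H2 orbT.
    by rewrite H1 H2.
have Hodd : odd (size s).-1.
  rewrite (ham_size Hs); have : 0 < q ^ n by rewrite expn_gt0.
  case E : (q ^ n) => [|m] //= _; have := congr1 odd E; rewrite oddX (negPf Hq) orbF /=.
  have -> : (n == 0) = false by case: (n) Hn.
  by case: (odd m).
have [S HS] : exists S, ham (adjP (@adjW n) (adjP adj1 adj1)) S (cw n o0, (o0, o0)) (cw n o1, (o1, o1)).
  apply: (ham_step2 (@adjP_sym _ _ _ _ adj1_sym adj1_sym) Hs _ HA); first by apply: cw_neq; case: (n) Hn.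
  by rewrite Hodd; exact: HC.
exists (map (@f2 n) S); rewrite -!f2_cw.
apply: (ham_map _ _ _ HS); [exact: f2_inj | exact: f2_surj | exact: f2_adj].
Qed.

Lemma main_sec n : odd n -> exists s, ham (@adjW n) s (cw n o0) (cw n o1).
Proof.
case Hq : (odd q) => Hn.
  elim: n {Hn} => [|n [s Hs]].
    exists [:: cw 0 o0]; have -> : cw 0 o1 = cw 0 o0 by apply: val_inj.
    exact: ham_W0.
  have [s' Hs'] := stepQ Hs; exists s'; by rewrite Hq f1_cw -f1_cw in Hs' *.
rewrite -(odd_double_half n) Hn add1n.
elim: n./2 => [|k [s Hs]].
  have [s' Hs'] := stepQ ham_W0; exists s'; rewrite Hq in Hs'.
  by rewrite (_ : cw 1 o1 = f1 (o1, cw 0 o0)) //; apply: val_inj.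
rewrite doubleS; apply: (step2 _ _ Hs).
  by rewrite /= odd_double.
by rewrite Hq.
Qed.

End Conc.

Theorem lemma3 (n q : nat) (Hn : odd n) (Hq : 3 <= q) :
  exists (s : seq (word q n)) (w0 : word q n),
    [/\ perm_eq s (enum [set: word q n]),
        (forall i, i.+1 < size s ->
           lee_dist (nth w0 s i) (nth w0 s i.+1) = 1),
        s = w0 :: behead s,
        is_const_word 0 w0
      & is_const_word 1 (last w0 s)].
Proof.
case: q Hq => [|[|[|q']]] // _.
have [s [H1 H2 H3 H4 H5]] := main_sec q' Hn.
exists s, (cw n (o0 q')).
case: s H1 H2 H3 H4 H5 => [|x s'] H1 H2 H3 H4 H5; first by have := H3 (cw n (o0 q')).
rewrite /= in H4; subst x.
split.
- apply: uniq_perm => //; first exact: enum_uniq.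
  by move=> x; rewrite mem_enum in_setT H3.
- move=> i Hi; apply/eqP; move/(pathP (cw n (o0 q'))): H1; exact.
- by [].
- by have := cw_const n (o0 q'); rewrite /o0 inordK.
- by rewrite H5; have := cw_const n (o1 q'); rewrite /o1 inordK.
Qed.
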